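(* Let $H$ be a real-valued harmonic function in $\mathbb{D}=\{|z|<1\}$ and let $u(z)=H(z)+\frac12(1-|z|^{2})\big(zH_z(z)+\overline{z}H_{\overline{z}}(z)\big)$ for $z\in\mathbb{D}$. Suppose $u\in C^{1}(\overline{\mathbb{D}})$ and $M\in\mathbb{R}$ is such that $u\le M$ on $\mathbb{T}=\{|z|=1\}$. Then $u\le M$ on $\mathbb{D}$.
   Context: $\overline{\mathbb{D}}$ is the closed unit disk; $u\in C^1(\overline{\mathbb{D}})$ means $u$ extends to a $C^1$ function on $\overline{\mathbb{D}}$, and $u$ on $\mathbb{T}$ refers to these boundary values. Note $zH_z+\overline zH_{\overline z}=r\,\partial H/\partial r$ for $z=re^{i\theta}$. *)

(* Defs.v *)
(* with Coquelicot for derivatives. Points of the plane are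
   pairs (x, y) of reals, z = x + i y. *)
From Stdlib Require Import Reals.
From Coquelicot Require Import Coquelicot.
Open Scope R_scope.

Definition in_disk (x y : R) : Prop := x ^ 2 + y ^ 2 < 1.
Definition in_cdisk (x y : R) : Prop := x ^ 2 + y ^ 2 <= 1.
Definition on_circle (x y : R) : Prop := x ^ 2 + y ^ 2 = 1.

Definition Dx (f : R -> R -> R) (x y : R) : R := Derive (fun t => f t y) x.
Definition Dy (f : R -> R -> R) (x y : R) : R := Derive (fun t => f x t) y.

Definition cont_within (P : R -> R -> Prop) (f : R -> R -> R) (x y : R) : Prop :=
  forall eps : R, 0 < eps -> exists delta : R, 0 < delta /\
    forall x' y', P x' y' -> (x' - x) ^ 2 + (y' - y) ^ 2 < delta ^ 2 ->
      Rabs (f x' y' - f x y) < eps.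

Definition C1_on (P : R -> R -> Prop) (f : R -> R -> R) : Prop :=
  forall x y, P x y ->
    ex_derive (fun t => f t y) x /\ ex_derive (fun t => f x t) y /\
    continuity_2d_pt f x y /\ continuity_2d_pt (Dx f) x y /\
    continuity_2d_pt (Dy f) x y.

Definition C2_on (P : R -> R -> Prop) (f : R -> R -> R) : Prop :=
  C1_on P f /\ C1_on P (Dx f) /\ C1_on P (Dy f).

Definition harmonic_disk (H : R -> R -> R) : Prop :=
  C2_on in_disk H /\
  forall x y, in_disk x y -> Dx (Dx H) x y + Dy (Dy H) x y = 0.

(* u = H + 1/2 (1 - |z|^2) (z H_z + zbar H_zbar),
   where z H_z + zbar H_zbar = x H_x + y H_y = r dH/dr *)
Definition u_of (H : R -> R -> R) (x y : R) : R :=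
  H x y + / 2 * (1 - (x ^ 2 + y ^ 2)) * (x * Dx H x y + y * Dy H x y).

(* u in C^1(closed disk): u is C^1 in the open disk, and u together with its
   first partial derivatives extend continuously to the closed disk;
   U is the extension of u, whose values on the circle are "u on T". *)
Definition C1_closed_disk_ext (u U : R -> R -> R) : Prop :=
  C1_on in_disk u /\
  (forall x y, in_disk x y -> U x y = u x y) /\
  (forall x y, in_cdisk x y -> cont_within in_cdisk U x y) /\
  exists gx gy : R -> R -> R,
    (forall x y, in_disk x y -> gx x y = Dx u x y /\ gy x y = Dy u x y) /\
    (forall x y, in_cdisk x y ->
       cont_within in_cdisk gx x y /\ cont_within in_cdisk gy x y).

(* Main.v *)
Require Import Defs.
From Stdlib Require Import Reals.
From Coquelicot Require Import Coquelicot.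
From Stdlib Require Import Lra Psatz.
Import Defs.
Open Scope R_scope.

Lemma disk_open x y : in_disk x y -> exists e, 0 < e /\
  forall u v, Rabs (u-x) < e -> Rabs (v-y) < e -> in_disk u v.
Proof.
  unfold in_disk; intros H.
  set (d := 1 - (x^2+y^2)).
  exists (d/5). split. unfold d; lra.
  intros u v Hu Hv.
  apply Rabs_def2 in Hu. apply Rabs_def2 in Hv.
  assert (Hx : x^2 <= 1) by nra. assert (Hy : y^2 <= 1) by nra.
  assert (Hx' : -1 <= x <= 1) by nra. assert (Hy' : -1 <= y <= 1) by nra.
  assert (0 < d <= 1) by (unfold d; nra).
  replace u with (x + (u - x)) by ring. replace v with (y + (v - y)) by ring.
  set (h := u - x) in *. set (k := v - y) in *.
  assert (h*h <= (d/5)*(d/5)) by nra. assert (k*k <= (d/5)*(d/5)) by nra.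
  assert (x*h <= d/5) by nra. assert (y*k <= d/5) by nra.
  assert ((d/5)*(d/5) <= d/25) by nra.
  replace ((x+h)^2 + (y+k)^2) with ((x^2+y^2) + 2*(x*h) + 2*(y*k) + h*h + k*k) by ring.
  unfold d in *. lra.
Qed.

Lemma D_diff f x y : C1_on in_disk f -> in_disk x y ->
  differentiable_pt_lim f x y (Dx f x y) (Dy f x y).
Proof.
  intros Hf Hxy.
  apply filterdiff_differentiable_pt_lim.
  destruct (Hf x y Hxy) as (Hex & Hey & Hc & Hcx & Hcy).
  apply (is_derive_filterdiff f x y (Dx f) (Dy f x y)).
  - destruct (disk_open x y Hxy) as (e & He & Hin).
    exists (mkposreal e He). intros [u v] [Hu Hv]. simpl in *.
    apply Derive_correct. apply (Hf u v). apply Hin; assumption.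
  - apply Derive_correct. exact Hey.
  - apply (continuity_2d_pt_filterlim (Dx f)). exact Hcx.
Qed.

Lemma CR1 f (p q : R -> R) t dp dq : C1_on in_disk f -> in_disk (p t) (q t) ->
  is_derive p t dp -> is_derive q t dq ->
  is_derive (fun t => f (p t) (q t)) t (Dx f (p t) (q t) * dp + Dy f (p t) (q t) * dq).
Proof.
  intros Hf Hin Hp Hq.
  apply is_derive_Reals. apply derivable_pt_lim_comp_2d.
  - apply D_diff; assumption.
  - apply is_derive_Reals; exact Hp.
  - apply is_derive_Reals; exact Hq.
Qed.


Definition D1 (a b X Y : R) := 1 + a*X + b*Y.
Definition D2 (a b X Y : R) := a*Y - b*X.
Definition den (a b X Y : R) := D1 a b X Y * D1 a b X Y + D2 a b X Y * D2 a b X Y.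
Definition phi1 a b X Y := ((X+a)*D1 a b X Y + (Y+b)*D2 a b X Y)/den a b X Y.
Definition phi2 a b X Y := ((Y+b)*D1 a b X Y - (X+a)*D2 a b X Y)/den a b X Y.
Definition kk a b := 1 - (a*a+b*b).
Definition Ak a b X Y := kk a b * (D1 a b X Y*D1 a b X Y - D2 a b X Y*D2 a b X Y)/(den a b X Y*den a b X Y).
Definition Bk a b X Y := - (2*kk a b * D1 a b X Y*D2 a b X Y)/(den a b X Y*den a b X Y).
Definition E1 a b X Y := D1 a b X Y*D1 a b X Y*D1 a b X Y - 3*D1 a b X Y*D2 a b X Y*D2 a b X Y.
Definition E2 a b X Y := D2 a b X Y*D2 a b X Y*D2 a b X Y - 3*D1 a b X Y*D1 a b X Y*D2 a b X Y.
Definition Ck a b X Y := -2*kk a b*(a*E1 a b X Y + b*E2 a b X Y)/(den a b X Y*den a b X Y*den a b X Y).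
Definition Dk a b X Y := -2*kk a b*(a*E2 a b X Y - b*E1 a b X Y)/(den a b X Y*den a b X Y*den a b X Y).

Definition Pc a b s c sn := phi1 a b (s*c) (s*sn).
Definition Qc a b s c sn := phi2 a b (s*c) (s*sn).
Definition Psc a b s c sn := Ak a b (s*c) (s*sn) * c - Bk a b (s*c) (s*sn) * sn.
Definition Qsc a b s c sn := Bk a b (s*c) (s*sn) * c + Ak a b (s*c) (s*sn) * sn.
Definition Pssc a b s c sn := Ck a b (s*c) (s*sn) * (c*c - sn*sn) - Dk a b (s*c) (s*sn) * (2*c*sn).
Definition Qssc a b s c sn := Dk a b (s*c) (s*sn) * (c*c - sn*sn) + Ck a b (s*c) (s*sn) * (2*c*sn).

Ltac nz Hd := let H' := fresh in pose proof Hd as H'; unfold Rminus in H'; repeat match goal with |- _ /\ _ => split end; repeat apply Rmult_integral_contrapositive_currified; try exact I; try exact Hd; try exact H'.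
Ltac unf := unfold Pc, Qc, Psc, Qsc, Pssc, Qssc, phi1, phi2, Ak, Bk, Ck, Dk, E1, E2, kk, den, D1, D2 in *.

Lemma dQs a b s c sn : den a b (s*c) (s*sn) <> 0 ->
  is_derive (fun s => Qc a b s c sn) s (Qsc a b s c sn).
Proof. intros Hd. unf. auto_derive. nz Hd. field. exact Hd. Qed.
Lemma dPss a b s c sn : den a b (s*c) (s*sn) <> 0 ->
  is_derive (fun s => Psc a b s c sn) s (Pssc a b s c sn).
Proof. intros Hd. unf. auto_derive. nz Hd. field. exact Hd. Qed.
Lemma dQss a b s c sn : den a b (s*c) (s*sn) <> 0 ->
  is_derive (fun s => Qsc a b s c sn) s (Qssc a b s c sn).
Proof. intros Hd. unf. auto_derive. nz Hd. field. exact Hd. Qed.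
Lemma dPt a b s t : den a b (s*cos t) (s*sin t) <> 0 ->
  is_derive (fun t => Pc a b s (cos t) (sin t)) t (- s * Qsc a b s (cos t) (sin t)).
Proof. intros Hd. unf. auto_derive. nz Hd. field. exact Hd. Qed.
Lemma dQt a b s t : den a b (s*cos t) (s*sin t) <> 0 ->
  is_derive (fun t => Qc a b s (cos t) (sin t)) t (s * Psc a b s (cos t) (sin t)).
Proof. intros Hd. unf. auto_derive. nz Hd. field. exact Hd. Qed.
Lemma dPtt a b s t : den a b (s*cos t) (s*sin t) <> 0 ->
  is_derive (fun t => - s * Qsc a b s (cos t) (sin t)) t
   (- s * s * Pssc a b s (cos t) (sin t) - s * Psc a b s (cos t) (sin t)).
Proof. intros Hd. unf. auto_derive. nz Hd. field. exact Hd. Qed.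
Lemma dQtt a b s t : den a b (s*cos t) (s*sin t) <> 0 ->
  is_derive (fun t => s * Psc a b s (cos t) (sin t)) t
   (- s * s * Qssc a b s (cos t) (sin t) - s * Qsc a b s (cos t) (sin t)).
Proof. intros Hd. unf. auto_derive. nz Hd. field. exact Hd. Qed.

Definition P a b u v := Pc a b u (cos v) (sin v).
Definition Q a b u v := Qc a b u (cos v) (sin v).
Definition Ps a b u v := Psc a b u (cos v) (sin v).
Definition Qs a b u v := Qsc a b u (cos v) (sin v).
Definition Pss a b u v := Pssc a b u (cos v) (sin v).
Definition Qss a b u v := Qssc a b u (cos v) (sin v).

Lemma den_ge a b s c sn : c*c+sn*sn = 1 ->
  den a b (s*c) (s*sn) = (1 + (a*(s*c)+b*(s*sn)))^2 + ((a*a+b*b)*(s*s) - (a*(s*c)+b*(s*sn))^2)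
  /\ (a*(s*c)+b*(s*sn))^2 <= (a*a+b*b)*(s*s).
Proof.
  intros Hcs. split.
  - unfold den, D1, D2. replace (s*s) with (s*s*(c*c+sn*sn)) by (rewrite Hcs; ring). ring.
  - replace (s*s) with (s*s*(c*c+sn*sn)) by (rewrite Hcs; ring).
    assert (0 <= (a*(s*sn) - b*(s*c))^2) by apply pow2_ge_0. nra.
Qed.

Lemma den_pos a b s c sn : a*a+b*b < 1 -> c*c+sn*sn = 1 -> -1 < s < 1 ->
  0 < den a b (s*c) (s*sn).
Proof.
  intros Hab Hcs Hs. destruct (den_ge a b s c sn Hcs) as [E L]. rewrite E.
  set (m := a*(s*c)+b*(s*sn)) in *.
  assert (s*s < 1) by nra.
  assert (0 <= a*a+b*b) by nra.
  assert ((a*a+b*b)*(s*s) < 1) by nra.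
  assert (m^2 < 1) by lra.
  assert (-1 < m) by nra.
  nra.
Qed.

Lemma sq_quot n1 n2 d1 d2 : d1*d1+d2*d2 <> 0 ->
  ((n1*d1 + n2*d2)/(d1*d1+d2*d2))^2 + ((n2*d1 - n1*d2)/(d1*d1+d2*d2))^2
  = (n1*n1+n2*n2)/(d1*d1+d2*d2).
Proof. intros H. field. exact H. Qed.

Lemma norm_PQ a b s c sn : c*c+sn*sn = 1 -> den a b (s*c) (s*sn) <> 0 ->
  Pc a b s c sn ^2 + Qc a b s c sn ^2 = 1 - kk a b * (1 - s*s) / den a b (s*c) (s*sn).
Proof.
  intros Hcs Hd. unfold Pc, Qc, phi1, phi2. unfold den in *.
  rewrite sq_quot by exact Hd.
  assert (E : ((s*c+a)*(s*c+a) + (s*sn+b)*(s*sn+b)) = den a b (s*c) (s*sn) - kk a b * (1 - s*s)).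
  { apply Rminus_diag_uniq. unfold den, D1, D2, kk.
    replace (_ - _) with ((c*c+sn*sn-1) * (s*s*(1-(a*a+b*b)))) by ring.
    rewrite Hcs. ring. }
  rewrite E. unfold den. field. exact Hd.
Qed.
Lemma dPs a b s c sn : den a b (s*c) (s*sn) <> 0 ->
  is_derive (fun s => Pc a b s c sn) s (Psc a b s c sn).
Proof. intros Hd. unf. auto_derive. nz Hd. field. exact Hd. Qed.


Lemma den_nz a b u v : a*a+b*b < 1 -> -1 < u < 1 -> den a b (u*cos v) (u*sin v) <> 0.
Proof.
  intros Hab Hu. apply Rgt_not_eq, Rlt_gt. apply den_pos; auto.
  rewrite <- (sin2_cos2 v). unfold Rsqr. ring.
Qed.

Lemma kk_pos a b : a*a+b*b < 1 -> 0 < kk a b.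
Proof. unfold kk; lra. Qed.

Lemma in_PQ a b u v : a*a+b*b < 1 -> -1 < u < 1 -> in_disk (P a b u v) (Q a b u v).
Proof.
  intros Hab Hu. unfold in_disk, P, Q.
  assert (Hcs : cos v * cos v + sin v * sin v = 1) by (rewrite <- (sin2_cos2 v); unfold Rsqr; ring).
  rewrite norm_PQ by (auto; apply den_nz; auto).
  assert (0 < den a b (u*cos v) (u*sin v)) by (apply den_pos; auto).
  assert (0 < kk a b) by (apply kk_pos; auto).
  assert (0 < 1 - u*u) by nra.
  assert (0 < kk a b * (1 - u*u) / den a b (u*cos v) (u*sin v)).
  { apply Rdiv_lt_0_compat; nra. }
  lra.
Qed.

Ltac cont2 :=
  repeat (unfold Rdiv;
  first
  [ apply continuity_2d_pt_plus
  | apply continuity_2d_pt_minus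
  | apply continuity_2d_pt_mult
  | apply continuity_2d_pt_opp
  | apply continuity_2d_pt_id1
  | apply continuity_2d_pt_id2
  | apply continuity_2d_pt_const
  | apply continuity_2d_pt_inv
  | apply (continuity_1d_2d_pt_comp cos (fun _ v => v)); [apply continuity_cos|]
  | apply (continuity_1d_2d_pt_comp sin (fun _ v => v)); [apply continuity_sin|]
  ]).

Ltac unfA := unfold P, Q, Ps, Qs, Pss, Qss, Pc, Qc, Psc, Qsc, Pssc, Qssc, phi1, phi2, Ak, Bk, Ck, Dk, E1, E2, kk in *.

Lemma cont_P a b u v : a*a+b*b < 1 -> -1 < u < 1 -> continuity_2d_pt (P a b) u v.
Proof.
  intros Hab Hu. pose proof (den_nz a b u v Hab Hu) as Hd.
  unfA. cont2; try exact Hd.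
Qed.
Ltac nzd Hd := repeat apply Rmult_integral_contrapositive_currified; exact Hd.
Lemma cont_Q a b u v : a*a+b*b < 1 -> -1 < u < 1 -> continuity_2d_pt (Q a b) u v.
Proof. intros Hab Hu. pose proof (den_nz a b u v Hab Hu) as Hd. unfA. cont2; nzd Hd. Qed.
Lemma cont_Ps a b u v : a*a+b*b < 1 -> -1 < u < 1 -> continuity_2d_pt (Ps a b) u v.
Proof. intros Hab Hu. pose proof (den_nz a b u v Hab Hu) as Hd. unfA. cont2; nzd Hd. Qed.
Lemma cont_Qs a b u v : a*a+b*b < 1 -> -1 < u < 1 -> continuity_2d_pt (Qs a b) u v.
Proof. intros Hab Hu. pose proof (den_nz a b u v Hab Hu) as Hd. unfA. cont2; nzd Hd. Qed.
Lemma cont_Pss a b u v : a*a+b*b < 1 -> -1 < u < 1 -> continuity_2d_pt (Pss a b) u v.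
Proof. intros Hab Hu. pose proof (den_nz a b u v Hab Hu) as Hd. unfA. cont2; nzd Hd. Qed.
Lemma cont_Qss a b u v : a*a+b*b < 1 -> -1 < u < 1 -> continuity_2d_pt (Qss a b) u v.
Proof. intros Hab Hu. pose proof (den_nz a b u v Hab Hu) as Hd. unfA. cont2; nzd Hd. Qed.


Lemma cont_comp2 F (p q : R -> R -> R) s t :
  continuity_2d_pt F (p s t) (q s t) -> continuity_2d_pt p s t -> continuity_2d_pt q s t ->
  continuity_2d_pt (fun u v => F (p u v) (q u v)) s t.
Proof.
  intros HF Hp Hq eps.
  destruct (HF eps) as [d Hd].
  destruct (Hp d) as [d1 H1]. destruct (Hq d) as [d2 H2].
  assert (Hm : 0 < Rmin d1 d2) by (apply Rmin_pos; apply cond_pos).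
  exists (mkposreal _ Hm). intros u v Hu Hv. simpl in Hu, Hv.
  apply Hd.
  - apply H1; eapply Rlt_le_trans; eauto; [apply Rmin_l|apply Rmin_l].
  - apply H2; eapply Rlt_le_trans; eauto; [apply Rmin_r|apply Rmin_r].
Qed.

Section S.
Context (a b : R).
Hypothesis Hab : a*a+b*b < 1.

Lemma dPu u v : -1 < u < 1 -> is_derive (fun z => P a b z v) u (Ps a b u v).
Proof. intros Hu. apply dPs. apply den_nz; auto. Qed.
Lemma dQu u v : -1 < u < 1 -> is_derive (fun z => Q a b z v) u (Qs a b u v).
Proof. intros Hu. apply dQs. apply den_nz; auto. Qed.
Lemma dPsu u v : -1 < u < 1 -> is_derive (fun z => Ps a b z v) u (Pss a b u v).
Proof. intros Hu. apply dPss. apply den_nz; auto. Qed.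
Lemma dQsu u v : -1 < u < 1 -> is_derive (fun z => Qs a b z v) u (Qss a b u v).
Proof. intros Hu. apply dQss. apply den_nz; auto. Qed.
Lemma dPv u v : -1 < u < 1 -> is_derive (fun z => P a b u z) v (- u * Qs a b u v).
Proof. intros Hu. apply dPt. apply den_nz; auto. Qed.
Lemma dQv u v : -1 < u < 1 -> is_derive (fun z => Q a b u z) v (u * Ps a b u v).
Proof. intros Hu. apply dQt. apply den_nz; auto. Qed.
Lemma dPtv u v : -1 < u < 1 -> is_derive (fun z => - u * Qs a b u z) v
   (- u * u * Pss a b u v - u * Ps a b u v).
Proof. intros Hu. apply dPtt. apply den_nz; auto. Qed.
Lemma dQtv u v : -1 < u < 1 -> is_derive (fun z => u * Ps a b u z) v
   (- u * u * Qss a b u v - u * Qs a b u v).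
Proof. intros Hu. apply dQtt. apply den_nz; auto. Qed.
End S.

Lemma dprod f (p q m : R -> R) u dp dq dm : C1_on in_disk f -> in_disk (p u) (q u) ->
  is_derive p u dp -> is_derive q u dq -> is_derive m u dm ->
  is_derive (fun z => f (p z) (q z) * m z) u
    ((Dx f (p u) (q u) * dp + Dy f (p u) (q u) * dq) * m u + f (p u) (q u) * dm).
Proof.
  intros Hf Hin Hp Hq Hm.
  pose proof (CR1 f p q u dp dq Hf Hin Hp Hq) as H1.
  pose proof (is_derive_mult _ _ _ _ _ H1 Hm) as H2.
  eapply is_derive_ext; [|apply H2]. { intros; reflexivity. }
  intros; apply Rmult_comm.
Qed.

Lemma is_derive_eq (f : R -> R) x d1 d2 : is_derive f x d1 -> d1 = d2 -> is_derive f x d2.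
Proof. intros H E; subst; exact H. Qed.

Lemma is_derive_plus' (f g : R -> R) x df dg : is_derive f x df -> is_derive g x dg ->
  is_derive (fun z => f z + g z) x (df + dg).
Proof. intros Hf Hg. exact (is_derive_plus f g x df dg Hf Hg). Qed.

Section S2.
Context (H : R -> R -> R) (a b : R).
Hypothesis hH : harmonic_disk H.
Hypothesis Hab : a*a+b*b < 1.

Definition pp u v := P a b u v.
Definition qq u v := Q a b u v.
Definition gg u v := H (pp u v) (qq u v).
Definition G1 u v := Dx H (pp u v) (qq u v) * Ps a b u v + Dy H (pp u v) (qq u v) * Qs a b u v.
Definition G2 u v := (Dx (Dx H) (pp u v) (qq u v) * Ps a b u v + Dy (Dx H) (pp u v) (qq u v) * Qs a b u v) * Ps a b u v
  + Dx H (pp u v) (qq u v) * Pss a b u v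
  + ((Dx (Dy H) (pp u v) (qq u v) * Ps a b u v + Dy (Dy H) (pp u v) (qq u v) * Qs a b u v) * Qs a b u v
  + Dy H (pp u v) (qq u v) * Qss a b u v).
Definition Pt u v := - u * Qs a b u v.
Definition Qt u v := u * Ps a b u v.
Definition Ptt u v := - u * u * Pss a b u v - u * Ps a b u v.
Definition Qtt u v := - u * u * Qss a b u v - u * Qs a b u v.
Definition T1 u v := Dx H (pp u v) (qq u v) * Pt u v + Dy H (pp u v) (qq u v) * Qt u v.
Definition T2 u v := (Dx (Dx H) (pp u v) (qq u v) * Pt u v + Dy (Dx H) (pp u v) (qq u v) * Qt u v) * Pt u v
  + Dx H (pp u v) (qq u v) * Ptt u v
  + ((Dx (Dy H) (pp u v) (qq u v) * Pt u v + Dy (Dy H) (pp u v) (qq u v) * Qt u v) * Qt u v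
  + Dy H (pp u v) (qq u v) * Qtt u v).

Let C1H : C1_on in_disk H. Proof. exact (proj1 (proj1 hH)). Qed.
Let C1Hx : C1_on in_disk (Dx H). Proof. exact (proj1 (proj2 (proj1 hH))). Qed.
Let C1Hy : C1_on in_disk (Dy H). Proof. exact (proj2 (proj2 (proj1 hH))). Qed.

Lemma d_gg u v : -1 < u < 1 -> is_derive (fun z => gg z v) u (G1 u v).
Proof.
  intros Hu. unfold gg, G1, pp, qq.
  apply (CR1 H (fun z => P a b z v) (fun z => Q a b z v)); auto.
  apply in_PQ; auto. apply dPu; auto. apply dQu; auto.
Qed.

Lemma d_G1 u v : -1 < u < 1 -> is_derive (fun z => G1 z v) u (G2 u v).
Proof.
  intros Hu. unfold G1, G2, pp, qq.
  apply is_derive_plus'.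
  - apply (dprod (Dx H) (fun z => P a b z v) (fun z => Q a b z v) (fun z => Ps a b z v)); auto.
    apply in_PQ; auto. apply dPu; auto. apply dQu; auto. apply dPsu; auto.
  - apply (dprod (Dy H) (fun z => P a b z v) (fun z => Q a b z v) (fun z => Qs a b z v)); auto.
    apply in_PQ; auto. apply dPu; auto. apply dQu; auto. apply dQsu; auto.
Qed.

Lemma d_ggv u v : -1 < u < 1 -> is_derive (fun z => gg u z) v (T1 u v).
Proof.
  intros Hu. unfold gg, T1, pp, qq, Pt, Qt.
  apply (CR1 H (fun z => P a b u z) (fun z => Q a b u z)); auto.
  apply in_PQ; auto. apply dPv; auto. apply dQv; auto.
Qed.

Lemma d_T1 u v : -1 < u < 1 -> is_derive (fun z => T1 u z) v (T2 u v).
Proof.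
  intros Hu. unfold T1, T2, pp, qq, Pt, Qt, Ptt, Qtt.
  apply is_derive_plus'.
  - apply (dprod (Dx H) (fun z => P a b u z) (fun z => Q a b u z) (fun z => - u * Qs a b u z)); auto.
    apply in_PQ; auto. apply dPv; auto. apply dQv; auto. apply dPtv; auto.
  - apply (dprod (Dy H) (fun z => P a b u z) (fun z => Q a b u z) (fun z => u * Ps a b u z)); auto.
    apply in_PQ; auto. apply dPv; auto. apply dQv; auto. apply dQtv; auto.
Qed.

Lemma laplace_polar u v : -1 < u < 1 -> u*u*G2 u v + u * G1 u v + T2 u v = 0.
Proof.
  intros Hu. pose proof (proj2 hH (pp u v) (qq u v) (in_PQ a b u v Hab Hu)) as L.
  unfold G2, G1, T2, Pt, Qt, Ptt, Qtt.
  set (hxx := Dx (Dx H) (pp u v) (qq u v)) in *.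
  set (hyy := Dy (Dy H) (pp u v) (qq u v)) in *.
  replace hyy with (- hxx) by lra. ring.
Qed.

Lemma cont_H x y : in_disk x y -> continuity_2d_pt H x y.
Proof. intros Hin. exact (proj1 (proj2 (proj2 (C1H x y Hin)))). Qed.
Lemma cont_Hx x y : in_disk x y -> continuity_2d_pt (Dx H) x y.
Proof. intros Hin. exact (proj1 (proj2 (proj2 (proj2 (C1H x y Hin))))). Qed.
Lemma cont_Hy x y : in_disk x y -> continuity_2d_pt (Dy H) x y.
Proof. intros Hin. exact (proj2 (proj2 (proj2 (proj2 (C1H x y Hin))))). Qed.
Lemma cont_Hxx x y : in_disk x y -> continuity_2d_pt (Dx (Dx H)) x y.
Proof. intros Hin. exact (proj1 (proj2 (proj2 (proj2 (C1Hx x y Hin))))). Qed.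
Lemma cont_Hxy x y : in_disk x y -> continuity_2d_pt (Dy (Dx H)) x y.
Proof. intros Hin. exact (proj2 (proj2 (proj2 (proj2 (C1Hx x y Hin))))). Qed.
Lemma cont_Hyx x y : in_disk x y -> continuity_2d_pt (Dx (Dy H)) x y.
Proof. intros Hin. exact (proj1 (proj2 (proj2 (proj2 (C1Hy x y Hin))))). Qed.
Lemma cont_Hyy x y : in_disk x y -> continuity_2d_pt (Dy (Dy H)) x y.
Proof. intros Hin. exact (proj2 (proj2 (proj2 (proj2 (C1Hy x y Hin))))). Qed.

Lemma cont_compF F u v : -1 < u < 1 -> (forall x y, in_disk x y -> continuity_2d_pt F x y) ->
  continuity_2d_pt (fun u v => F (pp u v) (qq u v)) u v.
Proof.
  intros Hu HF. apply cont_comp2. apply HF. apply in_PQ; auto.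
  apply cont_P; auto. apply cont_Q; auto.
Qed.

Ltac contF :=
  repeat first
  [ apply cont_Ps; assumption
  | apply cont_Qs; assumption
  | apply cont_Pss; assumption
  | apply cont_Qss; assumption
  | apply (cont_compF H); [assumption|exact cont_H]
  | apply (cont_compF (Dx H)); [assumption|exact cont_Hx]
  | apply (cont_compF (Dy H)); [assumption|exact cont_Hy]
  | apply (cont_compF (Dx (Dx H))); [assumption|exact cont_Hxx]
  | apply (cont_compF (Dy (Dx H))); [assumption|exact cont_Hxy]
  | apply (cont_compF (Dx (Dy H))); [assumption|exact cont_Hyx]
  | apply (cont_compF (Dy (Dy H))); [assumption|exact cont_Hyy]
  | apply continuity_2d_pt_plus
  | apply continuity_2d_pt_minus
  | apply continuity_2d_pt_mult
  | apply continuity_2d_pt_opp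
  | apply continuity_2d_pt_id1
  | apply continuity_2d_pt_const ].

Lemma cont_gg u v : -1 < u < 1 -> continuity_2d_pt gg u v.
Proof. intros Hu. unfold gg. contF. Qed.
Lemma cont_G1 u v : -1 < u < 1 -> continuity_2d_pt G1 u v.
Proof. intros Hu. unfold G1. contF. Qed.
Lemma cont_G2 u v : -1 < u < 1 -> continuity_2d_pt G2 u v.
Proof. intros Hu. unfold G2. contF. Qed.
Lemma cont_T1 u v : -1 < u < 1 -> continuity_2d_pt T1 u v.
Proof. intros Hu. unfold T1, Pt, Qt. contF. Qed.
Lemma cont_T2 u v : -1 < u < 1 -> continuity_2d_pt T2 u v.
Proof. intros Hu. unfold T2, Pt, Qt, Ptt, Qtt. contF. Qed.
End S2.


Lemma is_RInt_plusR f g a b If Ig : is_RInt f a b If -> is_RInt g a b Ig ->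
  is_RInt (fun y => f y + g y) a b (If + Ig).
Proof. intros. exact (is_RInt_plus f g a b If Ig H H0). Qed.
Lemma is_RInt_scalR f a b k If : is_RInt f a b If -> is_RInt (fun y => k * f y) a b (k * If).
Proof. intros. exact (is_RInt_scal f a b k If H). Qed.
Lemma is_RInt_minusR f g a b If Ig : is_RInt f a b If -> is_RInt g a b Ig ->
  is_RInt (fun y => f y - g y) a b (If - Ig).
Proof. intros. exact (is_RInt_minus f g a b If Ig H H0). Qed.
Lemma is_RInt_constR a b c : is_RInt (fun _ => c) a b ((b - a) * c).
Proof. exact (is_RInt_const a b c). Qed.

Lemma c2d_cont_v F u v : continuity_2d_pt F u v -> continuous (fun z => F u z) v.
Proof.
  intros HF. apply continuity_pt_filterlim.
  intros eps Heps. destruct (HF (mkposreal eps Heps)) as [d Hd].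
  exists d. split. apply cond_pos. intros x [_ Hx].
  simpl in *. unfold R_dist in *. apply Hd. rewrite Rminus_eq_0, Rabs_R0. apply cond_pos. exact Hx.
Qed.

Lemma c2d_cont_u F u v : continuity_2d_pt F u v -> continuous (fun z => F z v) u.
Proof.
  intros HF. apply continuity_pt_filterlim.
  intros eps Heps. destruct (HF (mkposreal eps Heps)) as [d Hd].
  exists d. split. apply cond_pos. intros x [_ Hx].
  simpl in *. unfold R_dist in *. apply Hd. exact Hx. rewrite Rminus_eq_0, Rabs_R0. apply cond_pos.
Qed.

Lemma exRInt_c2d F u A B : (forall v, continuity_2d_pt F u v) -> ex_RInt (fun v => F u v) A B.
Proof. intros HF. apply (ex_RInt_continuous (V:=R_CompleteNormedModule)). intros z _. apply c2d_cont_v. apply HF. Qed.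

Lemma is_RInt_c2d F u A B : (forall v, continuity_2d_pt F u v) ->
  is_RInt (fun v => F u v) A B (RInt (fun v => F u v) A B).
Proof. intros HF. apply (RInt_correct (V:=R_CompleteNormedModule)). apply exRInt_c2d. exact HF. Qed.

Lemma param_deriv (F dF : R -> R -> R) A B s :
  (forall u, -1 < u < 1 -> forall v, is_derive (fun z => F z v) u (dF u v)) ->
  (forall u, -1 < u < 1 -> forall v, continuity_2d_pt dF u v) ->
  (forall u, -1 < u < 1 -> forall v, continuity_2d_pt F u v) ->
  -1 < s < 1 ->
  is_derive (fun s => RInt (fun v => F s v) A B) s (RInt (fun v => dF s v) A B).
Proof.
  intros Hd HdF HF Hs.
  set (e := Rmin (1 - s) (1 + s)).
  assert (He : 0 < e) by (unfold e; apply Rmin_pos; lra).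
  assert (Hin : forall y, Rabs (y - s) < e -> -1 < y < 1).
  { intros y Hy. apply Rabs_def2 in Hy. unfold e in Hy.
    pose proof (Rmin_l (1-s) (1+s)). pose proof (Rmin_r (1-s) (1+s)). lra. }
  assert (E : RInt (fun v => dF s v) A B = RInt (fun t => Derive (fun u => F u t) s) A B).
  { apply RInt_ext. intros x _. symmetry. apply is_derive_unique. apply Hd. exact Hs. }
  rewrite E.
  apply is_derive_RInt_param.
  - exists (mkposreal e He). intros y Hy t _. exists (dF y t). apply Hd. apply Hin. exact Hy.
  - intros t _. apply continuity_2d_pt_ext_loc with (f := dF).
    + exists (mkposreal e He). intros u v Hu _. symmetry. apply is_derive_unique. apply Hd.
      apply Hin. exact Hu.
    + apply HdF. exact Hs.
  - exists (mkposreal e He). intros y Hy. apply exRInt_c2d. intros v. apply HF. apply Hin. exact Hy.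
Qed.

Lemma periodic_FTC (F dF : R -> R) :
  (forall v, is_derive F v (dF v)) -> (forall v, continuous dF v) -> F (2*PI) = F 0 ->
  is_RInt dF 0 (2*PI) 0.
Proof.
  intros Hd Hc Hp.
  assert (Hi : is_RInt dF 0 (2*PI) (minus (F (2*PI)) (F 0))).
  { apply (is_RInt_derive (V:=R_CompleteNormedModule)). intros; apply Hd. intros; apply Hc. }
  assert (E : minus (F (2*PI)) (F 0) = 0).
  { rewrite Hp. unfold minus, plus, opp; simpl. ring. }
  rewrite E in Hi. exact Hi.
Qed.


Lemma is_derive_eq0 (f : R -> R) x d1 d2 : is_derive f x d1 -> d1 = d2 -> is_derive f x d2.
Proof. intros H E; subst; exact H. Qed.

Lemma dId y : is_derive (fun s : R => s) y 1.
Proof. auto_derive; auto. Qed.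

Lemma deriv_cont (f : R -> R) x d : is_derive f x d -> continuity_pt f x.
Proof. intros H. apply continuity_pt_filterlim. apply (ex_derive_continuous f x). exists d; exact H. Qed.

Lemma const_on (K : R -> R) s0 s1 : s0 <= s1 ->
  (forall x, s0 < x < s1 -> is_derive K x 0) ->
  (forall x, s0 <= x <= s1 -> continuity_pt K x) -> K s1 = K s0.
Proof.
  intros Hle Hd Hc.
  destruct (MVT_gen K s0 s1 (fun _ => 0)) as (c & _ & E).
  - intros x Hx. rewrite Rmin_left, Rmax_right in Hx by lra. apply Hd; lra.
  - intros x Hx. rewrite Rmin_left, Rmax_right in Hx by lra. apply Hc; lra.
  - lra.
Qed.

Lemma ode0 (I I1 I2 : R -> R) :
  (forall s, -1 < s < 1 -> is_derive I s (I1 s)) ->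
  (forall s, -1 < s < 1 -> is_derive I1 s (I2 s)) ->
  (forall s, -1 < s < 1 -> s*s*I2 s + s*I1 s = 0) ->
  forall s, 0 <= s < 1 -> I s = I 0.
Proof.
  intros D1 D2 E s Hs.
  assert (HK : forall x, 0 < x < 1 -> I1 x = 0).
  { intros x Hx.
    assert (Kc : (fun s => s * I1 s) x = (fun s => s * I1 s) 0).
    { apply (const_on (fun s => s * I1 s) 0 x). lra.
      - intros y Hy. eapply is_derive_eq0.
        + apply (is_derive_mult (fun s => s) I1 y 1 (I2 y)). apply dId. apply D2; lra.
          intros; apply Rmult_comm.
        + simpl. unfold plus, mult; simpl. pose proof (E y ltac:(lra)).
          apply Rmult_eq_reg_l with y. 2: lra. nra.
      - intros y Hy. apply continuity_pt_mult. apply continuity_pt_id.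
        eapply deriv_cont. apply D2; lra. }
    simpl in Kc. assert (x * I1 x = 0) by lra.
    apply Rmult_integral in H. destruct H; lra. }
  destruct (Req_dec s 0) as [->|Hs0]. reflexivity.
  apply (const_on I 0 s). lra.
  - intros y Hy. rewrite <- (HK y) by lra. apply D1; lra.
  - intros y Hy. eapply deriv_cont. apply D1; lra.
Qed.

Lemma ode1 (I I1 I2 : R -> R) :
  (forall s, -1 < s < 1 -> is_derive I s (I1 s)) ->
  (forall s, -1 < s < 1 -> is_derive I1 s (I2 s)) ->
  (forall s, -1 < s < 1 -> s*s*I2 s + s*I1 s - I s = 0) ->
  forall s, 0 < s < 1 -> I s = s * I1 0.
Proof.
  intros D1 D2 E.
  assert (HK : forall x, 0 < x < 1 -> x * I1 x = I x).
  { intros x Hx.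
    assert (Kc : (fun s => s * (s * I1 s - I s)) x = (fun s => s * (s * I1 s - I s)) 0).
    { apply (const_on (fun s => s * (s * I1 s - I s)) 0 x). lra.
      - intros y Hy. eapply is_derive_eq0.
        + apply (is_derive_mult (fun s => s) (fun s => s * I1 s - I s) y 1 (1 * I1 y + y * I2 y - I1 y)).
          apply dId.
          apply (is_derive_minus (fun s => s * I1 s) I y (1 * I1 y + y * I2 y) (I1 y)).
          eapply is_derive_eq0.
          apply (is_derive_mult (fun s => s) I1 y 1 (I2 y)). apply dId. apply D2; lra.
          intros; apply Rmult_comm. simpl. unfold plus, mult; simpl. ring.
          apply D1; lra. intros; apply Rmult_comm.
        + simpl. unfold plus, mult; simpl. pose proof (E y ltac:(lra)). lra.
      - intros y Hy. apply continuity_pt_mult. apply continuity_pt_id.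
        apply continuity_pt_minus. apply continuity_pt_mult. apply continuity_pt_id.
        eapply deriv_cont. apply D2; lra. eapply deriv_cont. apply D1; lra. }
    simpl in Kc. assert (x * (x * I1 x - I x) = 0) by lra.
    apply Rmult_integral in H. destruct H; lra. }
  assert (HL : forall x y, 0 < x -> x <= y -> y < 1 -> I x / x = I y / y).
  { intros x y Hx Hxy Hy. symmetry.
    apply (const_on (fun s => I s / s) x y). lra.
    - intros z Hz. eapply is_derive_eq0.
      + apply (is_derive_div I (fun s => s) z (I1 z) 1). apply D1; lra. apply dId. lra.
      + simpl. unfold plus, mult, minus, opp, scal; simpl. unfold mult; simpl.
        pose proof (HK z ltac:(lra)). field_simplify. 2:lra. rewrite <- H. field. lra.
    - intros z Hz. apply continuity_pt_div. eapply deriv_cont. apply D1; lra.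
      apply continuity_pt_id. lra. }
  intros s Hs.
  assert (C : continuity_pt I1 0) by (eapply deriv_cont; apply D2; lra).
  assert (Hv : I1 0 = I s / s).
  { destruct (Req_dec (I1 0) (I s / s)) as [e|ne]; [exact e|exfalso].
    set (eps := Rabs (I1 0 - I s / s)).
    assert (Heps : 0 < eps) by (apply Rabs_pos_lt; lra).
    destruct (C eps Heps) as (d & Hd & Hdd).
    set (s' := Rmin s (d/2)).
    assert (Hs' : 0 < s' <= s) by (unfold s'; split; [apply Rmin_pos; lra| apply Rmin_l]).
    assert (Hs'd : s' <= d/2) by (unfold s'; apply Rmin_r).
    assert (X : R_dist (I1 s') (I1 0) < eps).
    { apply Hdd. split. unfold D_x, no_cond. split. auto. lra.
      simpl. unfold R_dist. replace (s' - 0) with s' by ring. rewrite Rabs_pos_eq; lra. }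
    replace (I1 s') with (I s / s) in X
      by (rewrite <- (HL s' s) by lra; rewrite <- (HK s') by lra; field; lra).
    unfold R_dist, eps in X. rewrite Rabs_minus_sym in X. lra. }
  rewrite Hv. field. lra.
Qed.


Lemma dConst (c x : R) : is_derive (fun _ : R => c) x 0.
Proof. auto_derive; auto. Qed.

Lemma derive_mulc (f : R -> R) x d c : is_derive f x d -> is_derive (fun z => f z * c) x (d * c).
Proof.
  intros H. eapply is_derive_eq.
  apply (is_derive_mult f (fun _ => c) x d 0 H). apply dConst. intros; apply Rmult_comm.
  simpl. unfold plus, mult; simpl. ring.
Qed.

Lemma derive_mulR (f g : R -> R) x df dg : is_derive f x df -> is_derive g x dg ->
  is_derive (fun z => f z * g z) x (df * g x + f x * dg).
Proof.
  intros Hf Hg. eapply is_derive_eq.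
  apply (is_derive_mult f g x df dg Hf Hg). intros; apply Rmult_comm.
  simpl. unfold plus, mult; simpl. ring.
Qed.

Lemma derive_minusR (f g : R -> R) x df dg : is_derive f x df -> is_derive g x dg ->
  is_derive (fun z => f z - g z) x (df - dg).
Proof. intros Hf Hg. exact (is_derive_minus f g x df dg Hf Hg). Qed.

Lemma c2d_w (w : R -> R) u v : (forall v, continuity_pt w v) -> continuity_2d_pt (fun _ v => w v) u v.
Proof. intros Hw. apply (continuity_1d_2d_pt_comp w (fun _ v => v)). apply Hw. apply continuity_2d_pt_id2. Qed.

Section S3.
Context (H : R -> R -> R) (a b : R).
Hypothesis hH : harmonic_disk H.
Hypothesis Hab : a*a+b*b < 1.
Context (w w1 w2 : R -> R) (lam : R).
Hypothesis Dw : forall v, is_derive w v (w1 v).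
Hypothesis Dw1 : forall v, is_derive w1 v (w2 v).
Hypothesis Cw : forall v, continuity_pt w v.
Hypothesis Cw1 : forall v, continuity_pt w1 v.
Hypothesis Cw2 : forall v, continuity_pt w2 v.
Hypothesis Pw : w (2*PI) = w 0.
Hypothesis Pw1 : w1 (2*PI) = w1 0.
Hypothesis Ew2 : forall v, w2 v = - lam * w v.

Definition Iw s := RInt (fun v => gg H a b s v * w v) 0 (2*PI).
Definition I1w s := RInt (fun v => G1 H a b s v * w v) 0 (2*PI).
Definition I2w s := RInt (fun v => G2 H a b s v * w v) 0 (2*PI).

Lemma cont_x (F : R -> R -> R) : (forall u, -1 < u < 1 -> forall v, continuity_2d_pt F u v) ->
  forall u, -1 < u < 1 -> forall v, continuity_2d_pt (fun u v => F u v * w v) u v.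
Proof. intros HF u Hu v. apply continuity_2d_pt_mult. apply HF; auto. apply c2d_w; auto. Qed.

Lemma dIw s : -1 < s < 1 -> is_derive Iw s (I1w s).
Proof.
  intros Hs. unfold Iw, I1w.
  apply (param_deriv (fun u v => gg H a b u v * w v) (fun u v => G1 H a b u v * w v)); auto.
  - intros u Hu v. apply derive_mulc. apply d_gg; auto.
  - apply cont_x. intros. apply cont_G1; auto.
  - apply cont_x. intros. apply cont_gg; auto.
Qed.

Lemma dI1w s : -1 < s < 1 -> is_derive I1w s (I2w s).
Proof.
  intros Hs. unfold I2w, I1w.
  apply (param_deriv (fun u v => G1 H a b u v * w v) (fun u v => G2 H a b u v * w v)); auto.
  - intros u Hu v. apply derive_mulc. apply d_G1; auto.
  - apply cont_x. intros. apply cont_G2; auto.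
  - apply cont_x. intros. apply cont_G1; auto.
Qed.

Lemma per_fun (F : R -> R -> R -> R) u : F u (cos (2*PI)) (sin (2*PI)) = F u (cos 0) (sin 0).
Proof. rewrite cos_2PI, sin_2PI, cos_0, sin_0. reflexivity. Qed.

Lemma FTC_T2 s : -1 < s < 1 ->
  is_RInt (fun v => T2 H a b s v * w v - gg H a b s v * w2 v) 0 (2*PI) 0.
Proof.
  intros Hs.
  apply (periodic_FTC (fun v => T1 H a b s v * w v - gg H a b s v * w1 v)).
  - intros v. eapply is_derive_eq.
    + apply derive_minusR; apply derive_mulR.
      * apply d_T1; auto.
      * apply Dw.
      * apply d_ggv; auto.
      * apply Dw1.
    + simpl. ring.
  - intros v. apply continuity_pt_filterlim.
    apply continuity_pt_minus; apply continuity_pt_mult; auto.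
    apply continuity_pt_filterlim. apply c2d_cont_v. apply cont_T2; auto.
    apply continuity_pt_filterlim. apply c2d_cont_v. apply cont_gg; auto.
  - rewrite Pw, Pw1.
    unfold T1, gg, pp, qq, Pt, Qt, P, Q, Ps, Qs.
    rewrite cos_2PI, sin_2PI, cos_0, sin_0. reflexivity.
Qed.

Lemma ode_rel s : -1 < s < 1 -> s*s*I2w s + s*I1w s - lam * Iw s = 0.
Proof.
  intros Hs.
  assert (A1 : is_RInt (fun v => G2 H a b s v * w v) 0 (2*PI) (I2w s)).
  { apply (is_RInt_c2d (fun u v => G2 H a b u v * w v)). intros v. apply cont_x; auto.
    intros; apply cont_G2; auto. }
  assert (A2 : is_RInt (fun v => G1 H a b s v * w v) 0 (2*PI) (I1w s)).
  { apply (is_RInt_c2d (fun u v => G1 H a b u v * w v)). intros v. apply cont_x; auto.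
    intros; apply cont_G1; auto. }
  assert (A3 : is_RInt (fun v => gg H a b s v * w v) 0 (2*PI) (Iw s)).
  { apply (is_RInt_c2d (fun u v => gg H a b u v * w v)). intros v. apply cont_x; auto.
    intros; apply cont_gg; auto. }
  pose proof (FTC_T2 s Hs) as A4.
  assert (B : is_RInt (fun v => s*s*(G2 H a b s v * w v) + s*(G1 H a b s v * w v) +
                 (T2 H a b s v * w v - gg H a b s v * w2 v) - lam * (gg H a b s v * w v)) 0 (2*PI)
               (s*s*I2w s + s*I1w s + 0 - lam * Iw s)).
  { apply is_RInt_minusR. apply is_RInt_plusR. apply is_RInt_plusR.
    apply is_RInt_scalR; auto. apply is_RInt_scalR; auto. auto. apply is_RInt_scalR; auto. }
  assert (B0 : is_RInt (fun v => s*s*(G2 H a b s v * w v) + s*(G1 H a b s v * w v) +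
                 (T2 H a b s v * w v - gg H a b s v * w2 v) - lam * (gg H a b s v * w v)) 0 (2*PI) 0).
  { apply is_RInt_ext with (fun _ => 0).
    - intros v _. pose proof (laplace_polar H a b hH Hab s v Hs) as L. rewrite Ew2.
      replace (s * s * (G2 H a b s v * w v) + s * (G1 H a b s v * w v) +
        (T2 H a b s v * w v - gg H a b s v * (- lam * w v)) - lam * (gg H a b s v * w v))
      with ((s * s * G2 H a b s v + s * G1 H a b s v + T2 H a b s v) * w v) by ring.
      rewrite L. symmetry. apply Rmult_0_l.
    - pose proof (is_RInt_constR 0 (2*PI) 0) as K. replace ((2*PI-0)*0) with 0 in K by ring. exact K. }
  pose proof (is_RInt_unique _ _ _ _ B) as U1.
  pose proof (is_RInt_unique _ _ _ _ B0) as U2.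
  rewrite U1 in U2. lra.
Qed.
End S3.


Ltac rring := match goal with |- ?x = ?y => change (@eq R x y) end; ring.
Ltac rfield := match goal with |- ?x = ?y => change (@eq R x y) end; field.

Lemma antider (F f : R -> R) : (forall v, is_derive F v (f v)) -> (forall v, continuity_pt f v) ->
  is_RInt f 0 (2*PI) (F (2*PI) - F 0).
Proof.
  intros Hd Hc. apply (is_RInt_derive (V:=R_CompleteNormedModule)).
  intros; apply Hd. intros; apply continuity_pt_filterlim; apply Hc.
Qed.

Lemma antider' (F f : R -> R) v0 : (forall v, is_derive F v (f v)) -> (forall v, continuity_pt f v) ->
  F (2*PI) - F 0 = v0 -> is_RInt f 0 (2*PI) v0.
Proof. intros Hd Hc E. rewrite <- E. apply antider; auto. Qed.

Lemma int_cos : is_RInt cos 0 (2*PI) 0.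
Proof.
  apply antider' with (F := sin).
  intros v. auto_derive; auto. ring. intros; apply continuity_cos.
  rewrite sin_2PI, sin_0; ring.
Qed.
Lemma int_sin : is_RInt sin 0 (2*PI) 0.
Proof.
  apply antider' with (F := fun v => - cos v).
  intros v. auto_derive; auto. ring. intros; apply continuity_sin.
  cbv beta. rewrite cos_2PI, cos_0; ring.
Qed.
Lemma int_cos2 : is_RInt (fun v => cos v * cos v) 0 (2*PI) PI.
Proof.
  apply antider' with (F := fun v => v/2 + sin v * cos v / 2).
  intros v. auto_derive; auto. pose proof (sin2_cos2 v). unfold Rsqr in *. nra.
  intros; apply continuity_pt_mult; apply continuity_cos.
  cbv beta. rewrite sin_2PI, sin_0; field.
Qed.
Lemma int_sin2 : is_RInt (fun v => sin v * sin v) 0 (2*PI) PI.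
Proof.
  apply antider' with (F := fun v => v/2 - sin v * cos v / 2).
  intros v. auto_derive; auto. pose proof (sin2_cos2 v). unfold Rsqr in *. nra.
  intros; apply continuity_pt_mult; apply continuity_sin.
  cbv beta. rewrite sin_2PI, sin_0; field.
Qed.
Lemma int_sincos : is_RInt (fun v => sin v * cos v) 0 (2*PI) 0.
Proof.
  apply antider' with (F := fun v => sin v * sin v / 2).
  intros v. auto_derive; auto. simpl. field.
  intros; apply continuity_pt_mult. apply continuity_sin. apply continuity_cos.
  cbv beta. rewrite sin_2PI, sin_0; field.
Qed.
Lemma int_one : is_RInt (fun _ => 1) 0 (2*PI) (2*PI).
Proof. pose proof (is_RInt_constR 0 (2*PI) 1). replace (2*PI) with ((2*PI-0)*1) at 2 by ring. exact H. Qed.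

Lemma P0 a b v : P a b 0 v = a.
Proof. unfold P, Pc, phi1, den, D1, D2. field_simplify; [reflexivity|try lra..]. Qed.
Lemma Q0 a b v : Q a b 0 v = b.
Proof. unfold Q, Qc, phi2, den, D1, D2. field_simplify; [reflexivity|try lra..]. Qed.
Lemma Ps0 a b v : Ps a b 0 v = kk a b * cos v.
Proof. unfold Ps, Psc, Ak, Bk, den, D1, D2. field_simplify; [reflexivity|try lra..]. Qed.
Lemma Qs0 a b v : Qs a b 0 v = kk a b * sin v.
Proof. unfold Qs, Qsc, Ak, Bk, den, D1, D2. field_simplify; [reflexivity|try lra..]. Qed.

Section S4.
Context (H : R -> R -> R) (a b : R).
Hypothesis hH : harmonic_disk H.
Hypothesis Hab : a*a+b*b < 1.

Lemma G1_0 v : G1 H a b 0 v = kk a b * (Dx H a b * cos v + Dy H a b * sin v).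
Proof. unfold G1, pp, qq. rewrite P0, Q0, Ps0, Qs0. ring. Qed.

Lemma gg_0 v : gg H a b 0 v = H a b.
Proof. unfold gg, pp, qq. rewrite P0, Q0. reflexivity. Qed.

Lemma I_one s : 0 <= s < 1 -> is_RInt (fun v => gg H a b s v * 1) 0 (2*PI) (2*PI*H a b).
Proof.
  intros Hs.
  assert (E : Iw H a b (fun _ => 1) s = Iw H a b (fun _ => 1) 0).
  { apply (ode0 _ (I1w H a b (fun _ => 1)) (I2w H a b (fun _ => 1))); auto.
    - intros; apply dIw; auto. intros; apply continuity_pt_const; intros ? ?; auto.
    - intros; apply dI1w; auto. intros; apply continuity_pt_const; intros ? ?; auto.
    - intros x Hx. pose proof (ode_rel H a b hH Hab (fun _ => 1) (fun _ => 0) (fun _ => 0) 0) as O.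
      rewrite <- (O) with (s := x); auto; try ring.
      all: try (intros; apply dConst); try (intros; apply continuity_pt_const; intros ? ?; auto);
           try reflexivity; try (intros; ring). }
  assert (E0 : Iw H a b (fun _ => 1) 0 = 2*PI*H a b).
  { unfold Iw. rewrite (RInt_ext _ (fun _ => H a b)).
    rewrite RInt_const. unfold scal; simpl. unfold mult; simpl. ring.
    intros x _. rewrite gg_0. apply Rmult_1_r. }
  rewrite <- E0, <- E. apply (is_RInt_c2d (fun u v => gg H a b u v * 1)).
  intros v. apply continuity_2d_pt_mult. apply cont_gg; auto; lra. apply continuity_2d_pt_const.
Qed.

Lemma I_trig (w w1 : R -> R) (Dw : forall v, is_derive w v (w1 v))
  (Dw1 : forall v, is_derive w1 v (- w v))
  (Cw : forall v, continuity_pt w v) (Cw1 : forall v, continuity_pt w1 v)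
  (Pw : w (2*PI) = w 0) (Pw1 : w1 (2*PI) = w1 0) s :
  0 < s < 1 -> is_RInt (fun v => gg H a b s v * w v) 0 (2*PI) (s * I1w H a b w 0).
Proof.
  intros Hs.
  assert (Cw2 : forall v, continuity_pt (fun v => - w v) v).
  { intros v. apply continuity_pt_opp. apply Cw. }
  rewrite <- (ode1 (Iw H a b w) (I1w H a b w) (I2w H a b w)); auto.
  - apply (is_RInt_c2d (fun u v => gg H a b u v * w v)).
    intros v. apply continuity_2d_pt_mult. apply cont_gg; auto; lra. apply c2d_w; auto.
  - intros; apply dIw; auto.
  - intros; apply dI1w; auto.
  - intros x Hx. pose proof (ode_rel H a b hH Hab w w1 (fun v => - w v) 1 Dw Dw1 Cw Cw2 Pw Pw1) as O.
    replace (x * x * I2w H a b w x + x * I1w H a b w x - Iw H a b w x)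
      with (x * x * I2w H a b w x + x * I1w H a b w x - 1 * Iw H a b w x) by ring.
    apply O; auto. intros; ring.
Qed.

Lemma I1w_cos : I1w H a b cos 0 = kk a b * Dx H a b * PI.
Proof.
  unfold I1w. apply is_RInt_unique.
  apply is_RInt_ext with (fun v => kk a b * (Dx H a b * (cos v * cos v) + Dy H a b * (sin v * cos v))).
  { intros x _. rewrite G1_0. rring. }
  replace (kk a b * Dx H a b * PI) with (kk a b * (Dx H a b * PI + Dy H a b * 0)) by ring.
  apply is_RInt_scalR. apply is_RInt_plusR; apply is_RInt_scalR.
  apply int_cos2. apply int_sincos.
Qed.

Lemma I1w_sin : I1w H a b sin 0 = kk a b * Dy H a b * PI.
Proof.
  unfold I1w. apply is_RInt_unique.
  apply is_RInt_ext with (fun v => kk a b * (Dx H a b * (sin v * cos v) + Dy H a b * (sin v * sin v))).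
  { intros x _. rewrite G1_0. rring. }
  replace (kk a b * Dy H a b * PI) with (kk a b * (Dx H a b * 0 + Dy H a b * PI)) by ring.
  apply is_RInt_scalR. apply is_RInt_plusR; apply is_RInt_scalR.
  apply int_sincos. apply int_sin2.
Qed.

Lemma repr s : 0 < s < 1 ->
  is_RInt (fun v => gg H a b s v * (1 + (a * cos v + b * sin v) / s)) 0 (2*PI) (2*PI*u_of H a b).
Proof.
  intros Hs.
  pose proof (I_one s ltac:(lra)) as J1.
  assert (Jc := I_trig cos (fun v => - sin v)). rewrite I1w_cos in Jc.
  assert (Js := I_trig sin cos). rewrite I1w_sin in Js.
  specialize (Jc ltac:(intros; auto_derive; auto; ring) ltac:(intros; auto_derive; auto; ring)
    continuity_cos ltac:(intros; apply continuity_pt_opp, continuity_sin)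
    ltac:(rewrite cos_2PI, cos_0; reflexivity) ltac:(rewrite sin_2PI, sin_0; reflexivity) s Hs).
  specialize (Js ltac:(intros; auto_derive; auto; ring) ltac:(intros; auto_derive; auto; ring)
    continuity_sin continuity_cos
    ltac:(rewrite sin_2PI, sin_0; reflexivity) ltac:(rewrite cos_2PI, cos_0; reflexivity) s Hs).
  apply is_RInt_ext with (fun v => gg H a b s v * 1 + (a/s * (gg H a b s v * cos v) + b/s * (gg H a b s v * sin v))).
  { intros x _. rfield. lra. }
  replace (2*PI*u_of H a b) with (2*PI*H a b + (a/s * (s * (kk a b * Dx H a b * PI)) + b/s * (s * (kk a b * Dy H a b * PI)))).
  2:{ unfold u_of, kk. field. lra. }
  apply is_RInt_plusR. exact J1. apply is_RInt_plusR; apply is_RInt_scalR; assumption.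
Qed.
End S4.


Lemma is_RInt_eqv (f : R -> R) A B l1 l2 : is_RInt f A B l1 -> l1 = l2 -> is_RInt f A B l2.
Proof. intros H E; subst; exact H. Qed.

Lemma bound_u H a b s Me : harmonic_disk H -> a*a+b*b < s*s -> 0 < s < 1 ->
  (forall v, gg H a b s v <= Me) -> u_of H a b <= Me.
Proof.
  intros hH Hs2 Hs Hg.
  assert (Hab : a*a+b*b < 1) by nra.
  pose proof (repr H a b hH Hab s Hs) as R1.
  assert (R2 : is_RInt (fun v => Me * (1 + (a * cos v + b * sin v) / s)) 0 (2*PI) (Me * (2*PI))).
  { apply is_RInt_scalR.
    apply is_RInt_ext with (fun v => 1 + (a/s * cos v + b/s * sin v)).
    { intros x _. rfield. lra. }
    assert (K := is_RInt_plusR _ _ _ _ _ _ int_one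
       (is_RInt_plusR _ _ _ _ _ _ (is_RInt_scalR _ _ _ (a/s) _ int_cos) (is_RInt_scalR _ _ _ (b/s) _ int_sin))).
    eapply is_RInt_eqv. exact K. rring. }
  assert (L := is_RInt_le _ _ 0 (2*PI) _ _ ltac:(pose proof PI_RGT_0; lra) R1 R2).
  assert (2*PI*u_of H a b <= Me * (2*PI)).
  { apply L. intros x _. apply Rmult_le_compat_r. 2: apply Hg.
    assert (Hcs : cos x * cos x + sin x * sin x = 1) by (rewrite <- (sin2_cos2 x); unfold Rsqr; ring).
    assert (E : (a * cos x + b * sin x)^2 <= (a*a+b*b)) by
      (rewrite <- (Rmult_1_r (a*a+b*b)), <- Hcs; pose proof (pow2_ge_0 (a*sin x - b*cos x)); nra).
    assert (Hm : - s <= a * cos x + b * sin x) by nra.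
    apply Rle_trans with (1 + (-s)/s). right; field; lra.
    apply Rplus_le_compat_l. unfold Rdiv. apply Rmult_le_compat_r. left; apply Rinv_0_lt_compat; lra. exact Hm. }
  pose proof PI_RGT_0. nra.
Qed.


Lemma polar x y : exists al, 0 <= al <= 2*PI /\
  x = sqrt (x^2+y^2) * cos al /\ y = sqrt (x^2+y^2) * sin al.
Proof.
  set (r := sqrt (x^2+y^2)).
  assert (Hr2 : r * r = x^2 + y^2) by (unfold r; apply sqrt_sqrt; nra).
  assert (Hr0 : 0 <= r) by (unfold r; apply sqrt_pos).
  destruct (Req_dec r 0) as [E|NE].
  { exists 0. split. pose proof PI_RGT_0; lra. rewrite E in Hr2. rewrite E. split; nra. }
  assert (Hr : 0 < r) by lra.
  set (c := x / r).
  assert (Hc : -1 <= c <= 1).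
  { unfold c. assert (x*x <= r*r) by nra. split.
    - apply Rmult_le_reg_r with r; auto. unfold Rdiv. rewrite Rmult_assoc, Rinv_l by lra. nra.
    - apply Rmult_le_reg_r with r; auto. unfold Rdiv. rewrite Rmult_assoc, Rinv_l by lra. nra. }
  assert (Hs : sqrt (1 - c²) = Rabs y / r).
  { replace (1 - c²) with ((y/r)²). rewrite sqrt_Rsqr_abs. unfold Rdiv. rewrite Rabs_mult.
    rewrite (Rabs_pos_eq (/r)). reflexivity. left; apply Rinv_0_lt_compat; auto.
    unfold c, Rsqr. apply Rmult_eq_reg_r with (r*r). 2: nra. field_simplify; try lra. }
  pose proof (acos_bound c) as Hab.
  destruct (Rle_lt_dec 0 y) as [Hy|Hy].
  - exists (acos c). split. pose proof PI_RGT_0; lra. split.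
    + rewrite cos_acos by auto. unfold c. field. lra.
    + rewrite sin_acos by auto. rewrite Hs. rewrite Rabs_pos_eq by auto. field. lra.
  - exists (2*PI - acos c). split. pose proof PI_RGT_0; lra. split.
    + rewrite cos_minus, cos_2PI, sin_2PI, cos_acos by auto. unfold c. field. lra.
    + rewrite sin_minus, cos_2PI, sin_2PI, sin_acos by auto. rewrite Hs.
      rewrite Rabs_left by auto. field. lra.
Qed.

Definition cl r := (Rabs r + 1 - Rabs (Rabs r - 1)) / 2.

Lemma cl_bounds r : 0 <= cl r <= 1.
Proof. unfold cl. unfold Rabs; repeat destruct Rcase_abs; lra. Qed.
Lemma cl_id r : 0 <= r <= 1 -> cl r = r.
Proof. intros H. unfold cl. unfold Rabs; repeat destruct Rcase_abs; lra. Qed.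
Lemma cl_cont r : continuity_pt cl r.
Proof.
  unfold cl. apply continuity_pt_div. apply continuity_pt_minus. apply continuity_pt_plus.
  apply Rcontinuity_abs. apply continuity_pt_const. intros ? ?; auto.
  apply (continuity_pt_comp (fun r => Rabs r - 1) Rabs). apply continuity_pt_minus.
  apply Rcontinuity_abs. apply continuity_pt_const. intros ? ?; auto. apply Rcontinuity_abs.
  apply continuity_pt_const. intros ? ?; auto. lra.
Qed.

Lemma comp_within U (p q : R -> R -> R) s t :
  cont_within in_cdisk U (p s t) (q s t) -> (forall u v, in_cdisk (p u v) (q u v)) ->
  continuity_2d_pt p s t -> continuity_2d_pt q s t ->
  continuity_2d_pt (fun u v => U (p u v) (q u v)) s t.
Proof.
  intros HU Hin Hp Hq eps.
  destruct (HU eps (cond_pos eps)) as (d & Hd & Hdd).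
  assert (Hd2 : 0 < d/2) by lra.
  destruct (Hp (mkposreal _ Hd2)) as [d1 H1]. destruct (Hq (mkposreal _ Hd2)) as [d2 H2].
  assert (Hm : 0 < Rmin d1 d2) by (apply Rmin_pos; apply cond_pos).
  exists (mkposreal _ Hm). intros u v Hu Hv. simpl in Hu, Hv.
  assert (A1 : Rabs (p u v - p s t) < d/2).
  { apply H1; eapply Rlt_le_trans; eauto; apply Rmin_l. }
  assert (A2 : Rabs (q u v - q s t) < d/2).
  { apply H2; eapply Rlt_le_trans; eauto; apply Rmin_r. }
  apply Rabs_def2 in A1. apply Rabs_def2 in A2.
  apply Hdd. apply Hin. nra.
Qed.

Lemma cont_curve F (x y : R -> R) t :
  continuity_2d_pt F (x t) (y t) -> continuity_pt x t -> continuity_pt y t ->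
  continuity_pt (fun t => F (x t) (y t)) t.
Proof.
  intros HF Hx Hy.
  assert (C : continuity_2d_pt (fun u v => F (x v) (y v)) 0 t).
  { apply (cont_comp2 F (fun u v => x v) (fun u v => y v)). exact HF.
    apply (continuity_1d_2d_pt_comp x (fun _ v => v)). exact Hx. apply continuity_2d_pt_id2.
    apply (continuity_1d_2d_pt_comp y (fun _ v => v)). exact Hy. apply continuity_2d_pt_id2. }
  apply continuity_pt_filterlim. exact (c2d_cont_v _ _ _ C).
Qed.

Lemma near_bdry_u H U M : C1_closed_disk_ext (u_of H) U ->
  (forall x y, on_circle x y -> U x y <= M) ->
  forall eps, 0 < eps -> exists d, 0 < d /\
    forall x y, in_disk x y -> 1 - d < x^2 + y^2 -> u_of H x y <= M + eps.
Proof.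
  intros (_ & HUu & HUc & _) HM eps Heps.
  set (V := fun u v => U (cl u * cos v) (cl u * sin v)).
  assert (HV : forall u v, continuity_2d_pt V u v).
  { intros u v. unfold V.
    apply (comp_within U (fun u v => cl u * cos v) (fun u v => cl u * sin v)).
    - apply HUc. unfold in_cdisk. pose proof (cl_bounds u). pose proof (sin2_cos2 v).
      unfold Rsqr in *. nra.
    - intros u' v'. unfold in_cdisk. pose proof (cl_bounds u'). pose proof (sin2_cos2 v').
      unfold Rsqr in *. nra.
    - apply continuity_2d_pt_mult. apply (continuity_1d_2d_pt_comp cl (fun u _ => u)).
      apply cl_cont. apply continuity_2d_pt_id1.
      apply (continuity_1d_2d_pt_comp cos (fun _ v => v)). apply continuity_cos. apply continuity_2d_pt_id2.
    - apply continuity_2d_pt_mult. apply (continuity_1d_2d_pt_comp cl (fun u _ => u)).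
      apply cl_cont. apply continuity_2d_pt_id1.
      apply (continuity_1d_2d_pt_comp sin (fun _ v => v)). apply continuity_sin. apply continuity_2d_pt_id2. }
  destruct (uniform_continuity_2d V (1/2) (3/2) 0 (2*PI) (fun u v _ _ => HV u v) (mkposreal eps Heps))
    as [du Hdu].
  exists (Rmin du (3/4)). split. apply Rmin_pos. apply cond_pos. lra.
  intros x y Hin Hxy.
  pose proof (Rmin_l du (3/4)) as Hm1. pose proof (Rmin_r du (3/4)) as Hm2.
  destruct (polar x y) as (al & Hal & Ex & Ey).
  set (r := sqrt (x^2+y^2)) in *.
  assert (Hr2 : r * r = x^2 + y^2) by (unfold r; apply sqrt_sqrt; nra).
  assert (Hr0 : 0 <= r) by (unfold r; apply sqrt_pos).
  unfold in_disk in Hin.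
  assert (Hr1 : r < 1) by nra.
  assert (Hrh : 1/2 < r) by nra.
  assert (E1 : V r al = u_of H x y).
  { unfold V. rewrite cl_id by lra. rewrite <- Ex, <- Ey. apply HUu. unfold in_disk. exact Hin. }
  assert (E2 : V 1 al <= M).
  { unfold V. rewrite cl_id by lra. rewrite !Rmult_1_l. apply HM. unfold on_circle.
    pose proof (sin2_cos2 al). unfold Rsqr in *. nra. }
  assert (E3 : Rabs (V r al - V 1 al) < eps).
  { apply (Hdu 1 al r al); try lra.
    rewrite Rabs_left1 by lra. nra.
    rewrite Rminus_eq_0, Rabs_R0. apply cond_pos. }
  apply Rabs_def2 in E3. lra.
Qed.


Lemma ray H M' c sn rho r : harmonic_disk H -> c*c + sn*sn = 1 -> 0 < rho <= r -> r < 1 ->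
  (forall t, rho <= t <= r -> u_of H (t*c) (t*sn) <= M') ->
  H (r*c) (r*sn) - M' <= (1 - r*r)/(r*r) * (rho*rho/(1-rho*rho) * (H (rho*c) (rho*sn) - M')).
Proof.
  intros hH Hcs Hr Hr1 Hu.
  pose proof (proj1 (proj1 hH)) as C1H.
  set (L := fun t => t*t/(1-t*t) * (H (t*c) (t*sn) - M')).
  set (dL := fun t => 2*t/((1-t*t)*(1-t*t)) * (u_of H (t*c) (t*sn) - M')).
  assert (Hin : forall t, 0 < t < 1 -> in_disk (t*c) (t*sn)).
  { intros t Ht. unfold in_disk. replace ((t*c)^2 + (t*sn)^2) with (t*t*(c*c+sn*sn)) by ring.
    rewrite Hcs. nra. }
  assert (HD : forall t, 0 < t < 1 -> is_derive L t (dL t)).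
  { intros t Ht. unfold L, dL.
    eapply is_derive_eq.
    - apply (derive_mulR _ _ t (2*t/((1-t*t)*(1-t*t))) (Dx H (t*c) (t*sn) * c + Dy H (t*c) (t*sn) * sn - 0)).
      + auto_derive. nra. field. nra.
      + apply (derive_minusR (fun t => H (t*c) (t*sn)) (fun _ => M')). apply (CR1 H (fun t => t*c) (fun t => t*sn) t c sn C1H (Hin t Ht)).
        auto_derive; auto; ring. auto_derive; auto; ring. apply dConst.
    - unfold u_of. replace ((t*c)^2 + (t*sn)^2) with (t*t) by (replace (t*t) with (t*t*(c*c+sn*sn)) by (rewrite Hcs; ring); ring).
      simpl. rfield. nra. }
  destruct (MVT_gen L rho r dL) as (xi & Hxi & E).
  - intros x Hx. rewrite Rmin_left, Rmax_right in Hx by lra. apply HD. lra.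
  - intros x Hx. rewrite Rmin_left, Rmax_right in Hx by lra. eapply deriv_cont. apply HD. lra.
  - rewrite Rmin_left, Rmax_right in Hxi by lra.
    assert (Hneg : dL xi <= 0).
    { unfold dL. assert (0 <= 2*xi/((1-xi*xi)*(1-xi*xi))).
      { apply Rmult_le_pos. lra. left. apply Rinv_0_lt_compat. assert (0 < 1 - xi*xi) by nra. nra. }
      assert (u_of H (xi*c) (xi*sn) - M' <= 0) by (pose proof (Hu xi Hxi); lra). nra. }
    assert (Lle : L r <= L rho) by nra.
    unfold L in Lle.
    assert (Hpos : 0 <= (1 - r*r)/(r*r)).
    { apply Rmult_le_pos. nra. left. apply Rinv_0_lt_compat. nra. }
    replace (H (r*c) (r*sn) - M') with ((1 - r*r)/(r*r) * (r * r / (1 - r * r) * (H (r * c) (r * sn) - M'))).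
    2:{ field. split; nra. }
    apply Rmult_le_compat_l; auto.
Qed.

Lemma near_bdry_H H U M : harmonic_disk H -> C1_closed_disk_ext (u_of H) U ->
  (forall x y, on_circle x y -> U x y <= M) ->
  forall eps, 0 < eps -> exists d, 0 < d /\
    forall x y, in_disk x y -> 1 - d < x^2 + y^2 -> H x y <= M + eps.
Proof.
  intros hH HC HM eps Heps.
  pose proof (proj1 (proj1 hH)) as C1H.
  destruct (near_bdry_u H U M HC HM (eps/2) ltac:(lra)) as (d1 & Hd1 & Hu).
  set (d1' := Rmin d1 (1/2)).
  assert (Hd1' : 0 < d1' <= 1/2) by (unfold d1'; split; [apply Rmin_pos; lra | apply Rmin_r]).
  assert (Hd1'' : d1' <= d1) by (unfold d1'; apply Rmin_l).
  set (rho := sqrt (1 - d1'/2)).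
  assert (Hrho2 : rho * rho = 1 - d1'/2) by (unfold rho; apply sqrt_sqrt; lra).
  assert (Hrho0 : 0 <= rho) by (unfold rho; apply sqrt_pos).
  assert (Hrho : 0 < rho < 1) by nra.
  set (M' := M + eps/2).
  destruct (continuity_ab_maj (fun al => H (rho * cos al) (rho * sin al)) 0 (2*PI))
    as (Mx & HMx & _).
  { pose proof PI_RGT_0; lra. }
  { intros al _. apply (cont_curve H (fun al => rho * cos al) (fun al => rho * sin al)).
    - destruct (C1H (rho * cos al) (rho * sin al)) as (_ & _ & Hc & _).
      unfold in_disk. pose proof (sin2_cos2 al). unfold Rsqr in *. nra. exact Hc.
    - apply continuity_pt_mult. apply continuity_pt_const; intros ? ?; auto. apply continuity_cos.
    - apply continuity_pt_mult. apply continuity_pt_const; intros ? ?; auto. apply continuity_sin. }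
  set (Bm := H (rho * cos Mx) (rho * sin Mx)) in *.
  set (K := rho*rho/(1-rho*rho) * Rmax 0 (Bm - M')).
  assert (HK : 0 <= K).
  { unfold K. apply Rmult_le_pos. apply Rmult_le_pos. nra. left; apply Rinv_0_lt_compat; nra.
    apply Rmax_l. }
  set (d := Rmin (d1'/2) (eps / (4 * (K + 1)))).
  assert (Hd : 0 < d).
  { unfold d. apply Rmin_pos. lra. apply Rdiv_lt_0_compat; lra. }
  assert (Hdd1 : d <= d1'/2) by (unfold d; apply Rmin_l).
  assert (Hdd2 : d <= eps / (4 * (K + 1))) by (unfold d; apply Rmin_r).
  exists d. split; auto.
  intros x y Hin Hxy.
  destruct (polar x y) as (al & Hal & Ex & Ey).
  set (r := sqrt (x^2+y^2)) in *.
  assert (Hr2 : r * r = x^2 + y^2) by (unfold r; apply sqrt_sqrt; nra).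
  assert (Hr0 : 0 <= r) by (unfold r; apply sqrt_pos).
  unfold in_disk in Hin.
  assert (Hr1 : r < 1) by nra.
  assert (Hrr : rho <= r) by nra.
  assert (Hcs : cos al * cos al + sin al * sin al = 1) by (pose proof (sin2_cos2 al); unfold Rsqr in *; lra).
  pose proof (ray H M' (cos al) (sin al) rho r hH Hcs ltac:(lra) Hr1) as R.
  rewrite <- Ex, <- Ey in R.
  assert (R' : H x y - M' <= (1 - r*r)/(r*r) * (rho*rho/(1-rho*rho) * (H (rho * cos al) (rho * sin al) - M'))).
  { apply R. intros t Ht. apply Hu.
    - unfold in_disk. replace ((t * cos al)^2 + (t * sin al)^2) with (t*t) by (rewrite <- (Rmult_1_r (t*t)) at 1; rewrite <- Hcs; ring).
      nra.
    - replace ((t * cos al)^2 + (t * sin al)^2) with (t*t) by (rewrite <- (Rmult_1_r (t*t)) at 1; rewrite <- Hcs; ring).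
      nra. }
  assert (Hb : H (rho * cos al) (rho * sin al) <= Bm) by (apply HMx; lra).
  assert (Hin2 : rho*rho/(1-rho*rho) * (H (rho * cos al) (rho * sin al) - M') <= K).
  { unfold K. apply Rmult_le_compat_l. apply Rmult_le_pos. nra. left; apply Rinv_0_lt_compat; nra.
    apply Rle_trans with (Bm - M'). lra. apply Rmax_r. }
  assert (Hq : 0 <= (1 - r*r)/(r*r) <= 2 * d).
  { split. apply Rmult_le_pos. nra. left; apply Rinv_0_lt_compat; nra.
    apply Rmult_le_reg_r with (r*r). nra. unfold Rdiv. rewrite Rmult_assoc, Rinv_l by nra. nra. }
  assert ((1 - r*r)/(r*r) * (rho*rho/(1-rho*rho) * (H (rho * cos al) (rho * sin al) - M')) <= 2 * d * K).
  { apply Rle_trans with ((1 - r*r)/(r*r) * K). apply Rmult_le_compat_l; lra.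
    apply Rmult_le_compat_r; lra. }
  assert (2 * d * K <= eps/2).
  { apply Rle_trans with (2 * (eps / (4 * (K + 1))) * K). apply Rmult_le_compat_r; lra.
    apply Rmult_le_reg_r with (4 * (K+1)). lra.
    replace (2 * (eps / (4 * (K + 1))) * K * (4 * (K + 1))) with (2 * eps * K) by (field; lra). nra. }
  unfold M' in *. lra.
Qed.


Lemma den_lower a b s c sn : a*a+b*b < 1 -> c*c+sn*sn = 1 -> 0 <= s <= 1 ->
  (1 - sqrt (a*a+b*b))^2 <= den a b (s*c) (s*sn).
Proof.
  intros Hab Hcs Hs. destruct (den_ge a b s c sn Hcs) as [E L]. rewrite E.
  set (m := a*(s*c)+b*(s*sn)) in *.
  set (r0 := sqrt (a*a+b*b)).
  assert (Hr0 : r0 * r0 = a*a+b*b) by (unfold r0; apply sqrt_sqrt; nra).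
  assert (Hr00 : 0 <= r0) by (unfold r0; apply sqrt_pos).
  assert (Hr01 : r0 < 1) by nra.
  assert (m*m <= (r0*s)*(r0*s)).
  { replace (m*m) with (m^2) by ring. replace ((r0*s)*(r0*s)) with ((a*a+b*b)*(s*s)) by (rewrite <- Hr0; ring). exact L. }
  assert (Hrs : 0 <= r0*s) by (apply Rmult_le_pos; lra).
  assert (Hm : - (r0 * s) <= m).
  { destruct (Rle_lt_dec (-(r0*s)) m) as [ok|bad]; [exact ok|]. exfalso.
    assert (0 < (-m - r0*s) * (-m + r0*s)) by (apply Rmult_lt_0_compat; lra). nra. }
  assert (0 <= 1 - r0) by lra.
  assert (r0 * s <= r0) by (rewrite <- (Rmult_1_r r0) at 2; apply Rmult_le_compat_l; lra).
  assert (1 - r0 <= 1 + m) by lra.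
  assert (0 <= (a*a+b*b)*(s*s) - m^2) by lra.
  nra.
Qed.

Theorem lemma3_aux (H U : R -> R -> R) (M : R) :
  harmonic_disk H ->
  C1_closed_disk_ext (u_of H) U ->
  (forall x y, on_circle x y -> U x y <= M) ->
  forall x y, in_disk x y -> u_of H x y <= M.
Proof.
  intros hH HC HM a b Hin.
  assert (Hab : a*a+b*b < 1) by (unfold in_disk in Hin; nra).
  assert (Main : forall eps, 0 < eps -> u_of H a b <= M + eps).
  { intros eps Heps.
    destruct (near_bdry_H H U M hH HC HM eps Heps) as (d & Hd & Hbd).
    set (r0 := sqrt (a*a+b*b)).
    assert (Hr0 : r0 * r0 = a*a+b*b) by (unfold r0; apply sqrt_sqrt; nra).
    assert (Hr00 : 0 <= r0) by (unfold r0; apply sqrt_pos).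
    assert (Hr01 : r0 < 1) by nra.
    set (Lb := (1 - r0)^2).
    assert (HLb : 0 < Lb) by (unfold Lb; nra).
    set (k := kk a b).
    assert (Hk : 0 < k) by (unfold k; apply kk_pos; auto).
    set (t := Rmax ((1 + (a*a+b*b))/2) (1 - d*Lb/(2*k))).
    assert (Ht1 : (1 + (a*a+b*b))/2 <= t) by apply Rmax_l.
    assert (Ht2 : 1 - d*Lb/(2*k) <= t) by apply Rmax_r.
    assert (Hdk : 0 < d*Lb/(2*k)) by (apply Rdiv_lt_0_compat; nra).
    assert (Ht3 : t < 1).
    { unfold t. apply Rmax_lub_lt; lra. }
    assert (Ht0 : 0 < t) by (pose proof (Rle_0_sqr a); pose proof (Rle_0_sqr b); unfold Rsqr in *; lra).
    set (s := sqrt t).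
    assert (Hs2 : s * s = t) by (unfold s; apply sqrt_sqrt; lra).
    assert (Hs0 : 0 <= s) by (unfold s; apply sqrt_pos).
    assert (Hs : 0 < s < 1) by nra.
    apply (bound_u H a b s (M + eps) hH); [nra | exact Hs |].
    intros v. unfold gg, pp, qq.
    assert (Hcs : cos v * cos v + sin v * sin v = 1) by (pose proof (sin2_cos2 v); unfold Rsqr in *; lra).
    apply Hbd. apply in_PQ; auto; lra.
    unfold P, Q. rewrite norm_PQ by (auto; apply den_nz; auto; lra).
    assert (Hden : Lb <= den a b (s * cos v) (s * sin v)) by (apply den_lower; auto; lra).
    assert (k * (1 - s*s) / den a b (s * cos v) (s * sin v) <= k * (1 - s*s) / Lb).
    { unfold Rdiv. apply Rmult_le_compat_l. nra. apply Rinv_le_contravar; lra. }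
    assert (k * (1 - s*s) / Lb < d).
    { apply Rmult_lt_reg_r with Lb. lra. unfold Rdiv. rewrite Rmult_assoc, Rinv_l by lra.
      rewrite Rmult_1_r. rewrite Hs2.
      assert (1 - t <= d * Lb / (2*k)) by lra.
      assert (k * (1 - t) <= k * (d * Lb / (2*k))) by (apply Rmult_le_compat_l; lra).
      replace (k * (d * Lb / (2*k))) with (d * Lb / 2) in * by (field; lra). nra. }
    fold k. lra. }
  destruct (Rle_dec (u_of H a b) M) as [Hle|Hgt]; auto.
  exfalso. apply Rnot_le_lt in Hgt.
  pose proof (Main ((u_of H a b - M)/2) ltac:(lra)). lra.
Qed.


Theorem lemma3 (H U : R -> R -> R) (M : R) :
  harmonic_disk H ->
  C1_closed_disk_ext (u_of H) U ->
  (forall x y, on_circle x y -> U x y <= M) ->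
  forall x y, in_disk x y -> u_of H x y <= M.
Proof. exact (lemma3_aux H U M). Qed.
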